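(* Let $m\ge1$, $y\in\mathbb{R}^{2m+1}_+$ with $c:=\sqrt{\sum_{i=0}^{2m}y_i}>0$, and let $(x^t)_{t\ge0}$ be generated by $$x^{t+1}_j=x^t_j\,\frac1c\sum_{\ell=0}^m\frac{x^t_\ell\,y_{\ell+j}}{(x^t*x^t)_{\ell+j}},\qquad j=0,\dots,m,$$ from an initial $x^0\in\mathbb{R}^{m+1}_+$. Then $\mathcal{I}(y\|x^\infty*x^\infty)$ takes the same value for all limit points $x^\infty$ of $(x^t)$.
   Context: For $x\in\mathbb{R}^{m+1}$ set $x_k=0$ for $k<0$, $k>m$, and $(x*x)_i=\sum_{j=0}^i x_{i-j}x_j$ for $i=0,\dots,2m$. $\mathcal{I}(y\|v)=\sum_{i}\big(y_i\log\frac{y_i}{v_i}-y_i+v_i\big)$ (convention $0\log0=0$; $+\infty$ if some $y_i>0=v_i$). The iteration is assumed well-defined (denominators positive, e.g. $x^0>0$). *)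

(* Defs.v *)
From HB Require Import structures.
From mathcomp Require Import all_boot all_order all_algebra.
From mathcomp Require Import all_classical all_reals all_analysis.
Set Implicit Arguments. Unset Strict Implicit. Unset Printing Implicit Defensive.
Import Order.TTheory GRing.Theory Num.Theory.
Import numFieldNormedType.Exports.
Local Open Scope ring_scope.
Local Open Scope classical_set_scope.

Section Defs.
Variable R : realType.

Definition ext (n : nat) (x : 'I_n -> R) (k : nat) : R :=
  match insub k with Some i => x i | None => 0 end.

Definition convsq (m : nat) (x : 'I_m.+1 -> R) (i : nat) : R :=
  \sum_(j < i.+1) ext x (i - j) * ext x j.

Definition Idiv (n : nat) (y v : 'I_n -> R) : \bar R :=
  if [exists i, (0 < y i) && (v i == 0)] then +oo%E
  else (\sum_i ((if y i == 0 then 0 else y i * ln (y i / v i)) - y i + v i))%:E.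

Definition seq_limit_point (m : nat) (x : nat -> 'I_m.+1 -> R) (a : 'I_m.+1 -> R) : Prop :=
  exists phi : nat -> nat, (forall k, (phi k < phi k.+1)%N) /\
    forall j, (fun k => x (phi k) j) @ \oo --> a j.
End Defs.

(* Main.v *)
Require Import Defs.
From HB Require Import structures.
From mathcomp Require Import all_boot all_order all_algebra.
From mathcomp Require Import all_classical all_reals all_analysis.
From mathcomp Require Import ring lra zify.
Import Order.TTheory GRing.Theory Num.Theory.
Import numFieldNormedType.Exports.
Set Implicit Arguments. Unset Strict Implicit.
Local Open Scope ring_scope.
Local Open Scope classical_set_scope.

Section Helpers.
Variable R : realType.

Lemma ext_ord n (x : 'I_n -> R) (i : 'I_n) : ext x i = x i.
Proof. by rewrite /ext valK. Qed.

Lemma ext_out n (x : 'I_n -> R) k : (n <= k)%N -> ext x k = 0.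
Proof. by move=> h; rewrite /ext insubN // -leqNgt. Qed.

Lemma ext_ge0 n (x : 'I_n -> R) k : (forall i, 0 <= x i) -> 0 <= ext x k.
Proof. by move=> h; rewrite /ext; case: insub. Qed.

Lemma ext_sum n (x : 'I_n -> R) k :
  ext x k = \sum_(i < n) (if (i : nat) == k then x i else 0).
Proof.
case: (ltnP k n) => hk.
  rewrite (bigD1 (Ordinal hk)) //= eqxx big1 ?addr0; first by rewrite -(ext_ord x (Ordinal hk)).
  move=> i ne; case: eqP => // e; case/eqP: ne; exact: val_inj.
rewrite ext_out // big1 // => i _; case: eqP => // e.
by have := ltn_ord i; rewrite e ltnNge hk.
Qed.

Lemma convsq_ge0 m (x : 'I_m.+1 -> R) k : (forall i, 0 <= x i) -> 0 <= convsq x k.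
Proof. move=> h; apply: sumr_ge0 => i _; apply: mulr_ge0; exact: ext_ge0. Qed.

Lemma convsq_pair m (x : 'I_m.+1 -> R) k :
  convsq x k = \sum_(j < m.+1) \sum_(l < m.+1) (if (j + l == k)%N then x j * x l else 0).
Proof.
rewrite exchange_big /=.
have -> : \sum_(l < m.+1) \sum_(j < m.+1) (if (j + l == k)%N then x j * x l else 0)
   = \sum_(l < m.+1) (if (l <= k)%N then ext x (k - l) * ext x l else 0).
  apply: eq_bigr => l _; case: ifPn => hl.
    rewrite ext_sum ext_ord mulr_suml; apply: eq_bigr => j _.
    have -> : (j + l == k)%N = ((j : nat) == k - l)%N.
      apply/eqP/eqP => e; lia.
    by case: eqP => // _; rewrite mul0r.
  rewrite big1 // => j _; case: eqP => // e; move: hl; lia.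
rewrite /convsq.
set g := fun n => ext x (k - n) * ext x n.
rewrite (big_ord_widen (k.+1 + m.+1) g) ?leq_addr //.
rewrite (big_ord_widen (k.+1 + m.+1) (fun l => if (l <= k)%N then g l else 0)) ?leq_addl //.
rewrite big_mkcond [in RHS]big_mkcond /=; apply: eq_bigr => i _.
rewrite ltnS; case: (leqP i k) => hik; case: (ltnP i m.+1) => him //.
by rewrite /g (ext_out x him) mulr0.
Qed.

Lemma sum_convsq m (x : 'I_m.+1 -> R) (f : nat -> R) :
  \sum_(i < m.*2.+1) f i * convsq x i =
  \sum_(j < m.+1) \sum_(l < m.+1) f (j + l)%N * (x j * x l).
Proof.
under eq_bigr do rewrite convsq_pair mulr_sumr.
rewrite exchange_big /=; apply: eq_bigr => j _.
under eq_bigr do rewrite mulr_sumr.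
rewrite exchange_big /=; apply: eq_bigr => l _.
have hjl : (j + l < m.*2.+1)%N.
  have := ltn_ord j; have := ltn_ord l; rewrite -addnn; lia.
rewrite (bigD1 (Ordinal hjl)) //= eqxx big1 ?addr0 //.
move=> i ne; case: eqP => e; last by rewrite mulr0.
by case/eqP: ne; apply: val_inj.
Qed.

Definition Fv m (y : 'I_(m.*2.+1) -> R) (x : 'I_m.+1 -> R) : R :=
  \sum_(i < m.*2.+1) (y i * ln (y i / convsq x i) - y i + convsq x i).

Lemma le_of_eq (a b : R) : a = b -> a <= b.
Proof. by move=> ->. Qed.

Lemma gibbs_term (a u : R) : 0 <= a -> (0 < a -> 0 < u) -> a * ln u <= a * u - a.
Proof.
rewrite le0r => /orP[/eqP->|ha] hu; first by rewrite !mul0r subr0.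
have u0 := hu ha.
have := @le_ln1Dx R (u - 1); have -> : 1 + (u - 1) = u by ring. move=> h.
rewrite -[X in _ - X]mulr1 -mulrBr ler_pM2l //; apply: h; lra.
Qed.

Lemma sum_ge_term (I : finType) (F : I -> R) (i0 : I) :
  (forall i, 0 <= F i) -> F i0 <= \sum_i F i.
Proof.
move=> h; rewrite (bigD1 i0) //= lerDl; apply: sumr_ge0 => i _; exact: h.
Qed.

Lemma sum_sq m (x : 'I_m.+1 -> R) :
  \sum_(i < m.*2.+1) convsq x i = (\sum_j x j) ^+ 2.
Proof.
have := sum_convsq x (fun _ => 1); under eq_bigr do rewrite mul1r; move=> ->.
rewrite expr2 mulr_suml; apply: eq_bigr => j _; rewrite mulr_sumr.
by apply: eq_bigr => l _; rewrite mul1r.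
Qed.
Ltac pos := repeat match goal with
  | |- is_true (0 < _ * _) => apply: mulr_gt0
  | |- is_true (0 < _ ^-1) => rewrite invr_gt0
  | |- is_true (0 < _ ^+ _) => apply: exprn_gt0
  | |- is_true (_ \in Num.pos) => rewrite posrE
  end; try assumption.

Lemma step_dec m (y : 'I_(m.*2.+1) -> R) (c : R) (x x' : 'I_m.+1 -> R) :
 (forall i, 0 <= y i) -> 0 < c -> c ^+ 2 = \sum_i y i ->
 (forall j, 0 <= x j) ->
 (forall i : 'I_(m.*2.+1), 0 < convsq x i) -> (forall i : 'I_(m.*2.+1), 0 < convsq x' i) ->
 (forall j, x' j = x j * (c^-1 * \sum_(l < m.+1) x l * ext y (l + j) / convsq x (l + j))) ->
 Fv y x' <= Fv y x.
Proof.
move=> hy hc hcy hx hv hv' hrec.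
have hjl : forall j l : 'I_m.+1, (j + l < m.*2.+1)%N.
  move=> j l; have := ltn_ord j; have := ltn_ord l; rewrite -addnn; lia.
have hvn : forall j l : 'I_m.+1, 0 < convsq x (j + l) := fun j l => hv (Ordinal (hjl j l)).
have hvn' : forall j l : 'I_m.+1, 0 < convsq x' (j + l) := fun j l => hv' (Ordinal (hjl j l)).
have hyn : forall k, 0 <= ext y k := fun k => ext_ge0 k hy.
have hx' : forall j, 0 <= x' j.
  move=> j; rewrite hrec; apply: mulr_ge0 => //; apply: mulr_ge0; first by rewrite invr_ge0 ltW.
  apply: sumr_ge0 => l _; apply: divr_ge0; first by apply: mulr_ge0.
  by apply: ltW; rewrite addnC.
have hc0 : c != 0 by rewrite gt_eqF.
pose a (j l : 'I_m.+1) := ext y (j + l) / convsq x (j + l) * (x j * x l).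
have ha0 : forall j l, 0 <= a j l.
  move=> j l; apply: mulr_ge0; [apply: divr_ge0 => //; exact: ltW | exact: mulr_ge0].
have hasym : forall j l, a j l = a l j by move=> j l; rewrite /a addnC [x j * _]mulrC.
have hsa : forall j, \sum_l a j l = c * x' j.
  move=> j; rewrite hrec mulrCA (mulrA c) mulfV // mul1r mulr_sumr; apply: eq_bigr => l _.
  by rewrite /a addnC; field; rewrite gt_eqF // -addnC.
have hsumy : forall (f : nat -> R), (forall i : 'I_(m.*2.+1), f i * convsq x i = y i) ->
     \sum_(j < m.+1) \sum_(l < m.+1) f (j + l)%N * (x j * x l) = c ^+ 2.
  by move=> f hf; rewrite -sum_convsq hcy; apply: eq_bigr => i _; rewrite hf.
have hsa2 : \sum_j \sum_l a j l = c ^+ 2.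
  apply: (hsumy (fun k => ext y k / convsq x k)) => i; by rewrite ext_ord divfK // gt_eqF.
have hsx' : \sum_j x' j = c.
  apply: (mulfI hc0); rewrite -expr2 -hsa2 mulr_sumr; apply: eq_bigr => j _; by rewrite hsa.
set S := \sum_j x j.
have hSv : \sum_(i < m.*2.+1) convsq x i = S ^+ 2 by rewrite sum_sq.
have hSv' : \sum_(i < m.*2.+1) convsq x' i = c ^+ 2 by rewrite sum_sq hsx'.
have hS : 0 < S.
  have S0 : 0 <= S by apply: sumr_ge0.
  rewrite lt0r S0 andbT; apply/negP => /eqP S0'.
  have : 0 < S ^+ 2.
    rewrite -hSv; apply: (lt_le_trans (hv ord0)); apply: sum_ge_term => i; exact: ltW.
  by rewrite S0' expr2 mulr0 ltxx.
have hpos : forall j l, 0 < a j l -> [/\ 0 < x j, 0 < x l, 0 < x' j & 0 < x' l].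
  move=> j l hajl.
  have hxjl : x j * x l != 0.
    apply/negP => /eqP E1; move: hajl; by rewrite /a E1 mulr0 ltxx.
  have hxj : 0 < x j.
    rewrite lt0r hx andbT; apply/negP => /eqP E1; move: hxjl; by rewrite E1 mul0r eqxx.
  have hxl : 0 < x l.
    rewrite lt0r hx andbT; apply/negP => /eqP E1; move: hxjl; by rewrite E1 mulr0 eqxx.
  have h1 : 0 < c * x' j.
    rewrite -hsa; apply: (lt_le_trans hajl); exact: sum_ge_term.
  have h2 : 0 < c * x' l.
    rewrite -hsa; rewrite hasym in hajl; apply: (lt_le_trans hajl); exact: sum_ge_term.
  by split => //; [rewrite -(pmulr_rgt0 _ hc) | rewrite -(pmulr_rgt0 _ hc)].
pose u (j l : 'I_m.+1) := x' j * x' l * (convsq x' (j + l))^-1 * convsq x (j + l) * S ^+ 2 / (x j * x l * c ^+ 2).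
have G1 : \sum_j \sum_l a j l * ln (u j l) <= \sum_j \sum_l (a j l * u j l - a j l).
  apply: ler_sum => j _; apply: ler_sum => l _; apply: gibbs_term => // /hpos [? ? ? ?].
  rewrite /u; apply: divr_gt0; last by rewrite !mulr_gt0 // exprn_gt0.
  by rewrite !mulr_gt0 ?exprn_gt0 ?invr_gt0.
have hau : forall j l, a j l * u j l = ext y (j + l) / convsq x' (j + l) * (S ^+ 2 / c ^+ 2) * (x' j * x' l).
  move=> j l; have [xj0|xj0] := eqVneq (x j) 0.
    by rewrite /a /u hrec xj0 !(mul0r, mulr0).
  have [xl0|xl0] := eqVneq (x l) 0.
    by rewrite /a /u (hrec l) xl0 !(mul0r, mulr0).
  rewrite /a /u; field.
  by rewrite xj0 xl0 hc0 /= !gt_eqF.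
have Sau : \sum_j \sum_l a j l * u j l = S ^+ 2.
  under eq_bigr do under eq_bigr do rewrite hau.
  rewrite -(sum_convsq x' (fun k => ext y k / convsq x' k * (S ^+ 2 / c ^+ 2))).
  transitivity (\sum_(i < m.*2.+1) S ^+ 2 / c ^+ 2 * y i).
    apply: eq_bigr => i _; rewrite ext_ord; field.
    by rewrite hc0 gt_eqF.
  by rewrite -mulr_sumr -hcy; field.
pose K : R := 2 * (ln S - ln c).
have hlnu : forall j l, a j l * ln (u j l) = a j l *
   ((ln (x' j) - ln (x j)) + (ln (x' l) - ln (x l)) + (ln (convsq x (j + l)) - ln (convsq x' (j + l))) + K).
  move=> j l; have := ha0 j l; rewrite le0r => /orP[/eqP->|/hpos [h1 h2 h3 h4]]; first by rewrite !mul0r.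
  congr (_ * _).
  have h5 := hvn j l; have h6 := hvn' j l.
  rewrite /u ln_div; last 2 first.
  - by rewrite posrE; pos.
  - by rewrite posrE; pos.
  rewrite !lnM; try by rewrite posrE; pos.
  rewrite lnV ?lnXn; try by rewrite ?posrE; pos.
  rewrite /K mulr2n; lra.
pose P := \sum_j x' j * (ln (x' j) - ln (x j)).
pose D := \sum_(i < m.*2.+1) y i * (ln (convsq x i) - ln (convsq x' i)).
have hT1 : \sum_j \sum_l a j l * (ln (x' j) - ln (x j)) = c * P.
  rewrite /P mulr_sumr; apply: eq_bigr => j _.
  by rewrite -mulr_suml hsa mulrA.
have hT2 : \sum_j \sum_l a j l * (ln (x' l) - ln (x l)) = c * P.
  rewrite exchange_big /P mulr_sumr; apply: eq_bigr => l _ /=.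
  under eq_bigr do rewrite hasym.
  by rewrite -mulr_suml hsa mulrA.
have hT3 : \sum_j \sum_l a j l * (ln (convsq x (j + l)) - ln (convsq x' (j + l))) = D.
  have -> : \sum_j \sum_l a j l * (ln (convsq x (j + l)) - ln (convsq x' (j + l))) =
     \sum_(j < m.+1) \sum_(l < m.+1) (fun k => ext y k / convsq x k * (ln (convsq x k) - ln (convsq x' k))) (j + l)%N * (x j * x l).
    by apply: eq_bigr => j _; apply: eq_bigr => l _; rewrite /a /= mulrAC.
  rewrite -(sum_convsq x (fun k => ext y k / convsq x k * (ln (convsq x k) - ln (convsq x' k)))) /D.
  apply: eq_bigr => i _.
  by rewrite ext_ord mulrAC divfK // gt_eqF.
have hT4 : \sum_j \sum_l a j l * K = c ^+ 2 * K.
  rewrite -hsa2 mulr_suml; apply: eq_bigr => j _; by rewrite mulr_suml.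
have E1 : 2 * c * P + D + c ^+ 2 * K <= S ^+ 2 - c ^+ 2.
  have -> : 2 * c * P + D + c ^+ 2 * K = \sum_j \sum_l a j l * ln (u j l).
    under eq_bigr do under eq_bigr do rewrite hlnu mulrDr mulrDr mulrDr.
    under eq_bigr do rewrite !big_split.
    rewrite !big_split /= hT1 hT2 hT3 hT4; ring.
  apply: (le_trans G1); rewrite -Sau -hsa2 -!sumrB.
  by apply: ler_sum => j _; rewrite sumrB.
have hxpj : forall j, 0 < x' j -> 0 < x j.
  move=> j h; rewrite lt0r hx andbT; apply/negP => /eqP E0.
  by move: h; rewrite hrec E0 mul0r ltxx.
pose w j := x j * c / (x' j * S).
have G2a : \sum_j x' j * ln (w j) <= \sum_j (x' j * w j - x' j).
  apply: ler_sum => j _; apply: gibbs_term => // h.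
  have := hxpj j h => h2; rewrite /w; pos.
have G2b : \sum_j (x' j * w j - x' j) <= 0.
  rewrite sumrB hsx' subr_le0.
  apply: (le_trans (y := \sum_j x j * c / S)).
    apply: ler_sum => j _; have [E0|E0] := eqVneq (x' j) 0.
      rewrite E0 mul0r; apply: divr_ge0; [apply: mulr_ge0 => //; exact: ltW | exact: ltW].
    rewrite /w; apply: le_of_eq; field.
    by rewrite E0 gt_eqF.
  rewrite -mulr_suml -mulr_suml -/S; apply: le_of_eq; field; by rewrite gt_eqF.
have E2 : - P + c * (ln c - ln S) <= 0.
  have <- : \sum_j x' j * ln (w j) = - P + c * (ln c - ln S).
    rewrite /P -{1}hsx' mulr_suml -sumrN -big_split; apply: eq_bigr => j _ /=.
    have [E0|E0] := eqVneq (x' j) 0; first by rewrite E0 !mul0r; lra.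
    have h1 : 0 < x' j by rewrite lt0r E0 hx'.
    have h2 := hxpj j h1.
    rewrite /w ln_div; try by rewrite ?posrE; pos.
    rewrite !lnM; try by rewrite ?posrE; pos.
    lra.
  exact: (le_trans G2a G2b).
have hF : Fv y x' = Fv y x + D + c ^+ 2 - S ^+ 2.
  have -> : Fv y x' = \sum_(i < m.*2.+1) ((y i * ln (y i / convsq x i) - y i + convsq x i)
      + y i * (ln (convsq x i) - ln (convsq x' i)) + convsq x' i - convsq x i).
    apply: eq_bigr => i _.
    have [E0|E0] := eqVneq (y i) 0; first by rewrite E0 !mul0r; ring.
    have h1 : 0 < y i by rewrite lt0r E0 hy.
    have := hv i; have := hv' i => h2 h3.
    rewrite !ln_div; try by rewrite ?posrE; pos.
    ring.
  by rewrite sumrB big_split big_split /= hSv hSv'.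
have E2' : 2 * c * P >= 2 * c ^+ 2 * (ln c - ln S).
  have : 0 <= 2 * c * (P - c * (ln c - ln S)) by apply: mulr_ge0; lra.
  move=> h; lra.
rewrite hF; move: E1 E2'; rewrite /K; lra.
Qed.
Lemma cvg_sum_ord n (f : 'I_n -> nat -> R) (l : 'I_n -> R) :
  (forall i, f i @ \oo --> l i) -> (fun k => \sum_i f i k) @ \oo --> \sum_i l i.
Proof. by move=> h; apply: cvg_big => //; exact: add_continuous. Qed.

Lemma cvg_ext n (f : nat -> 'I_n -> R) (a : 'I_n -> R) k :
  (forall j, (fun t => f t j) @ \oo --> a j) -> (fun t => ext (f t) k) @ \oo --> ext a k.
Proof. by move=> h; rewrite /ext; case: insub => [j|]; [exact: h | exact: cvg_cst]. Qed.

Lemma cvg_convsq m (f : nat -> 'I_m.+1 -> R) (a : 'I_m.+1 -> R) k :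
  (forall j, (fun t => f t j) @ \oo --> a j) -> (fun t => convsq (f t) k) @ \oo --> convsq a k.
Proof.
move=> h; rewrite /convsq; apply: cvg_sum_ord => i.
by apply: cvgM; apply: cvg_ext.
Qed.

Lemma term_ge0 (Y V : R) : 0 <= Y -> 0 <= V -> (0 < Y -> 0 < V) -> 0 <= Y * ln (Y / V) - Y + V.
Proof.
rewrite le0r => /orP[/eqP->|hY] hV hYV; first by rewrite mul0r subr0 add0r.
have hV' := hYV hY.
have := gibbs_term (a := Y) (u := V / Y) (ltW hY) (fun _ => divr_gt0 hV' hY).
have -> : Y / V = (V / Y)^-1 by rewrite invf_div.
have e : Y * (V / Y) = V by field; rewrite gt_eqF.
rewrite e lnV ?posrE ?divr_gt0 // mulrN; lra.
Qed.
End Helpers.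

Unset Implicit Arguments.

Theorem proposition5 (R : realType) (m : nat) (hm : (1 <= m)%N)
  (y : 'I_(m.*2.+1) -> R) (hy : forall i, 0 <= y i)
  (hc : 0 < Num.sqrt (\sum_i y i))
  (x : nat -> 'I_m.+1 -> R) (hx0 : forall j, 0 <= x 0%N j)
  (hwd : forall (t : nat) (i : 'I_(m.*2.+1)), 0 < convsq (x t) i)
  (hrec : forall (t : nat) (j : 'I_m.+1),
     x t.+1 j = x t j * ((Num.sqrt (\sum_i y i))^-1 *
       \sum_(l < m.+1) x t l * ext y (l + j) / convsq (x t) (l + j))) :
  forall a b : 'I_m.+1 -> R, seq_limit_point x a -> seq_limit_point x b ->
    Idiv y (fun i => convsq a i) = Idiv y (fun i => convsq b i).
Proof.
set c := Num.sqrt (\sum_i y i) in hc hrec.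
have hcy : c ^+ 2 = \sum_i y i by rewrite sqr_sqrtr // sumr_ge0.
have hxp : forall t j, 0 <= x t j.
  elim=> [|t IH] j //; rewrite hrec; apply: mulr_ge0 => //; apply: mulr_ge0.
    by rewrite invr_ge0 ltW.
  apply: sumr_ge0 => l _; apply: divr_ge0; first by apply: mulr_ge0 => //; exact: ext_ge0.
  exact: convsq_ge0.
pose F t := Fv y (x t).
have hdec : forall t, F t.+1 <= F t.
  move=> t; apply: (step_dec (c := c)) => //; exact: hrec.
have hF0 : forall t, 0 <= F t.
  move=> t; apply: sumr_ge0 => i _.
  apply: term_ge0; [exact: hy | exact: ltW (hwd t i) | move=> _; exact: hwd].
have hni : {homo F : n m / (n <= m)%N >-> (m <= n)%R}.
  by apply/nonincreasing_seqP.
have hL : F @ \oo --> inf (range F).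
  apply: nonincreasing_cvgn => //; exists 0 => _ [t _ <-]; exact: hF0.
set L := inf (range F) in hL.
suff key : forall a, seq_limit_point x a -> Idiv y (fun i => convsq a i) = L%:E.
  by move=> a b /key -> /key ->.
move=> a [phi [hphi hcv]].
have hphi_ge : forall k, (k <= phi k)%N.
  elim=> [|k IH] //; exact: leq_ltn_trans IH (hphi k).
have hphi_oo : phi @ \oo --> \oo.
  apply/cvgnyPge => A; apply: filterS (nbhs_infty_ge A) => k hk.
  exact: leq_trans hk (hphi_ge k).
have hFphi : (F \o phi) @ \oo --> L by apply: cvg_comp hphi_oo hL.
have hv : forall i : 'I_(m.*2.+1), (fun k => convsq (x (phi k)) i) @ \oo --> convsq a i.
  by move=> i; apply: cvg_convsq.
have hlow : forall i, 0 < y i -> 0 < convsq a i.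
  move=> i hyi.
  pose M := (F 0%N + y i) / y i.
  have hb : forall k, y i / expR M <= convsq (x (phi k)) i.
    move=> k; have hV := hwd (phi k) i.
    have h1 : F (phi k) <= F 0%N by apply: hni.
    have h2 : y i * ln (y i / convsq (x (phi k)) i) - y i <= F (phi k).
      apply: le_trans (sum_ge_term i _); last first.
        move=> i'; apply: term_ge0; [exact: hy | exact: ltW (hwd _ i') | move=> _; exact: hwd].
      by rewrite lerDl ltW.
    have h3 : ln (y i / convsq (x (phi k)) i) <= M.
      rewrite /M ler_pdivlMr // mulrC; lra.
    have h4 : y i / convsq (x (phi k)) i <= expR M.
      have e : expR (ln (y i / convsq (x (phi k)) i)) = y i / convsq (x (phi k)) i.
        by rewrite lnK // posrE divr_gt0.
      by rewrite -e ler_expR.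
    rewrite ler_pdivrMr ?expR_gt0 //; rewrite ler_pdivrMr // in h4.
    by rewrite mulrC.
  have hge : y i / expR M <= convsq a i.
    have hcl : closed [set r : R | y i / expR M <= r] := @closed_ge _ (y i / expR M).
    have hn : \forall k \near \oo, y i / expR M <= convsq (x (phi k)) i.
      by apply: nearW => k; exact: hb.
    exact: (closed_cvg _ hcl hn _ (hv i)).
  apply: lt_le_trans hge; apply: divr_gt0 => //; exact: expR_gt0.
have hterm : forall i, (fun k => y i * ln (y i / convsq (x (phi k)) i) - y i + convsq (x (phi k)) i)
    @ \oo --> y i * ln (y i / convsq a i) - y i + convsq a i.
  move=> i; apply: cvgD; last exact: hv.
  apply: cvgB; last exact: cvg_cst.
  have [E0|E0] := eqVneq (y i) 0.
    rewrite E0; under eq_cvg do rewrite mul0r.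
    rewrite mul0r; exact: cvg_cst.
  have hyi : 0 < y i by rewrite lt0r E0 hy.
  have hpos := hlow i hyi.
  apply: cvgM; first exact: cvg_cst.
  have hdiv : (fun k => y i / convsq (x (phi k)) i) @ \oo --> y i / convsq a i.
    apply: cvgM; first exact: cvg_cst.
    by apply: cvgV; [rewrite gt_eqF | exact: hv].
  exact: (cvg_comp _ _ hdiv (continuous_ln (divr_gt0 hyi hpos))).
have hG : (fun k => F (phi k)) @ \oo -->
    \sum_i (y i * ln (y i / convsq a i) - y i + convsq a i).
  exact: (cvg_sum_ord hterm).
have eL : L = \sum_i (y i * ln (y i / convsq a i) - y i + convsq a i).
  exact: (cvg_unique _ hFphi hG).
rewrite /Idiv; case: ifPn.
  move=> /existsP [i /andP [hyi /eqP hvi]].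
  by have := hlow i hyi; rewrite hvi ltxx.
move=> _; rewrite eL; congr EFin; apply: eq_bigr => i _.
by case: eqP => [->|//]; rewrite mul0r.
Qed.
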